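(* Let $k\ge 2$ and $m$ be positive integers, and let \[ p_m(x) = x^k - m x^{k-1} - x^{k-2} - \dots - x - 1 . \] Then $p_m(x)$ has a unique positive real root $\varrho_m$, and it satisfies $m<\varrho_m<m+1$. Moreover, every complex root $\gamma\neq\varrho_m$ of $p_m(x)$ satisfies $|\gamma|<\varrho_m$.
   Context: For $k=2$ the polynomial is $p_m(x)=x^2-mx-1$. *)

(* Defs.v *)
From mathcomp Require Import all_boot all_order all_algebra all_field.
Set Implicit Arguments. Unset Strict Implicit. Unset Printing Implicit Defensive.
Import GRing.Theory Num.Theory.
Local Open Scope ring_scope.

(* p_m(x) = x^k - m x^(k-1) - x^(k-2) - ... - x - 1, over algC
   (complex algebraic numbers; all roots of this integer polynomial lie there). *)
Definition pm (k m : nat) : {poly algC} :=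
  'X^k - m%:R *: 'X^(k.-1) - \sum_(i < k.-1) 'X^i.

(* Main.v *)
Require Import Defs.
From mathcomp Require Import all_boot all_order all_algebra all_field.
From mathcomp Require Import zify ring.
Import Order.TTheory GRing.Theory Num.Theory.
Local Open Scope ring_scope.

Definition e {R : pzRingType} (n m : nat) (x : R) :=
  x ^+ n.+2 - m%:R * x ^+ n.+1 - \sum_(i < n.+1) x ^+ i.

Definition pmR (R : nzRingType) (k m : nat) : {poly R} :=
  'X^k - m%:R *: 'X^(k.-1) - \sum_(i < k.-1) 'X^i.

Lemma hornE (R : comNzRingType) n m (x : R) : (pmR R n.+2 m).[x] = e n m x.
Proof.
rewrite /pmR /e /= !hornerE horner_sum; congr (_ - _).
by apply: eq_bigr => i _; rewrite hornerXn.
Qed.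

Lemma e_morph (R S : comNzRingType) (f : {rmorphism R -> S}) n m x :
  f (e n m x) = e n m (f x).
Proof.
rewrite /e !rmorphB rmorphM rmorph_nat !rmorphXn rmorph_sum.
by congr (_ - _); apply: eq_bigr => i _; rewrite rmorphXn.
Qed.

Lemma e_mono (R : numDomainType) n m (x y : R) :
  0 < x -> x < y -> 0 <= e n m x -> 0 < e n m y.
Proof.
move=> x0 xy ex; have y0 : 0 < y := lt_trans x0 xy.
have key : x^+n.+1 * e n m y - y^+n.+1 * e n m x =
   x^+n.+1 * y^+n.+1 * (y - x) + \sum_(i < n.+1) (y^+n.+1 * x^+i - x^+n.+1 * y^+i).
  rewrite /e sumrB !mulrBr !mulr_sumr !exprS; ring.
have pos : 0 < x^+n.+1 * e n m y - y^+n.+1 * e n m x.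
  rewrite key; apply: ltr_wpDr.
    apply: sumr_ge0 => i _.
    have hi : (n.+1 = (n.+1 - i) + i)%N by have := ltn_ord i; lia.
    rewrite [in y ^+ n.+1]hi [in x ^+ n.+1]hi !exprD.
    have -> : y ^+ (n.+1 - i) * y ^+ i * x ^+ i - x ^+ (n.+1 - i) * x ^+ i * y ^+ i
      = (y ^+ (n.+1 - i) - x ^+ (n.+1 - i)) * (x ^+ i * y ^+ i) by ring.
    apply: mulr_ge0; last by rewrite mulr_ge0 // exprn_ge0 // ltW.
    rewrite subr_ge0 lerXn2r // ?nnegrE ltW //.
  by rewrite !mulr_gt0 ?exprn_gt0 ?subr_gt0.
have : 0 < x^+n.+1 * e n m y.
  apply: lt_le_trans pos _; rewrite gerBl.
  by apply: mulr_ge0 => //; rewrite exprn_ge0 // ltW.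
by rewrite (pmulr_rgt0 _ (exprn_gt0 n.+1 x0)).
Qed.

Lemma e_m_neg (R : numDomainType) n m : e n m (m%:R : R) < 0.
Proof.
rewrite /e exprS subrr sub0r oppr_lt0 big_ord_recl expr0.
apply: lt_le_trans ltr01 _; rewrite lerDl sumr_ge0 // => i _.
by rewrite exprn_ge0.
Qed.

Lemma geom_lt a n : (2 <= a)%N -> (\sum_(i < n.+1) a ^ i < a ^ n.+1)%N.
Proof.
move=> ha; elim: n => [|n IH]; first by rewrite big_ord1 expn0 expn1.
rewrite big_ord_recr /=.
have h : (2 * a ^ n.+1 <= a ^ n.+2)%N by rewrite [(a ^ n.+2)%N]expnS leq_mul2r ha orbT.
have H := ltn_add2r (a ^ n.+1) (\sum_(i < n.+1) a ^ i)%N (a ^ n.+1).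
rewrite IH addnn -mul2n in H.
exact: leq_trans H h.
Qed.

Lemma e_m1_pos (R : numDomainType) n m : (0 < m)%N -> 0 < e n m (m.+1%:R : R).
Proof.
move=> hm.
have h : (m.+1%:R : R)^+n.+2 - m%:R * (m.+1%:R)^+n.+1 = (m.+1%:R : R)^+n.+1.
  by rewrite exprS -mulrBl -natrB // subSnn mul1r.
rewrite /e h subr_gt0; under eq_bigr do rewrite -natrX.
by rewrite -natr_sum -natrX ltr_nat geom_lt.
Qed.

Lemma ge0E (R : numDomainType) (a : R) : a = 0 -> 0 <= a.
Proof. by move=> ->. Qed.

Lemma sumF (R : comNzRingType) n (c x : R) :
  \sum_(i < n.+2) (if (i : nat) == n.+1 then c else 1) * x ^+ i
  = c * x ^+ n.+1 + \sum_(i < n.+1) x ^+ i.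
Proof.
rewrite big_ord_recr /= eqxx addrC; congr (_ + _).
by apply: eq_bigr => i _; rewrite /= (ltn_eqF (ltn_ord i)) mul1r.
Qed.

Theorem mainTheorem1 (k m : nat) (hk : (2 <= k)%N) (hm : (0 < m)%N) :
  exists rho : algC,
    [/\ 0 < rho, root (pm k m) rho,
        (forall x : algC, 0 < x -> root (pm k m) x -> x = rho),
        m%:R < rho /\ rho < m.+1%:R
      & forall g : algC, root (pm k m) g -> g != rho -> `|g| < rho].
Proof.
case: k hk => [|[|n]] // _.
have rootP (z : algC) : root (pm n.+2 m) z = (e n m z == 0).
  by rewrite rootE -hornE.
have [x /andP[xl xu]] : exists2 x : algR, m%:R <= x <= m.+1%:R & root (pmR algR n.+2 m) x.
  apply: poly_ivt; first by rewrite ler_nat.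
  by rewrite !hornE !ltW ?e_m_neg ?e_m1_pos.
rewrite rootE hornE => /eqP ex.
set rho := algRval x.
have erho : e n m rho = 0 by rewrite /rho -e_morph ex rmorph0.
have rl : m%:R <= rho.
  have : algRval m%:R <= algRval x by [].
  by rewrite rmorph_nat.
have ru : rho <= m.+1%:R.
  have : algRval x <= algRval m.+1%:R by [].
  by rewrite rmorph_nat.
have rl' : m%:R < rho.
  rewrite lt_neqAle rl andbT; apply/eqP => h.
  by have := e_m_neg algC n m; rewrite h erho ltxx.
have ru' : rho < m.+1%:R.
  rewrite lt_neqAle ru andbT; apply/eqP => h.
  by have := @e_m1_pos algC n m hm; rewrite -h erho ltxx.
have rho0 : 0 < rho by apply: le_lt_trans rl'.
have rhoR : rho \is Num.real by apply: gtr0_real.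
exists rho; split => //.
- by rewrite rootP erho.
- move=> z z0; rewrite rootP => /eqP ez.
  have [zr|zr|//] := real_ltgtP (gtr0_real z0) rhoR.
  + by have := @e_mono _ n m _ _ z0 zr (@ge0E _ _ ez); rewrite erho ltxx.
  + by have := @e_mono _ n m _ _ rho0 zr (@ge0E _ _ erho); rewrite ez ltxx.
move=> g; rewrite rootP => /eqP eg gneq.
set r := `|g|.
have eqg : g ^+ n.+2 = m%:R * g ^+ n.+1 + \sum_(i < n.+1) g ^+ i.
  by apply/eqP; rewrite -subr_eq0 opprD addrA; apply/eqP; exact: eg.
have er : e n m r <= 0.
  rewrite /e -addrA -opprD subr_le0 /r -normrX eqg.
  apply: le_trans (ler_normD _ _) _; apply: lerD.
    by rewrite normrM normr_nat normrX.
  apply: le_trans (ler_norm_sum _ _ _) _.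
  by apply: ler_sum => i _; rewrite normrX.
have [//|rr|rr] := real_ltgtP (normr_real g) rhoR.
  by have := @e_mono _ n m _ _ rho0 rr (@ge0E _ _ erho) => /lt_le_trans/(_ er); rewrite ltxx.
exfalso; move/eqP: gneq; apply.
have g0 : g != 0 by rewrite -normr_eq0 rr gt_eqF.
pose F (i : 'I_n.+2) := (if (i : nat) == n.+1 then (m%:R : algC) else 1) * g ^+ i.
have normF i : `|F i| = (if (i : nat) == n.+1 then (m%:R : algC) else 1) * r ^+ i.
  by rewrite /F normrM normrX; case: ifP => _; rewrite ?normr_nat ?normr1.
have hsum : `|\sum_(i < n.+2) F i| = \sum_(i < n.+2) `|F i|.
  under [RHS]eq_bigr do rewrite normF.
  rewrite /F !sumF -eqg normrX -/r.
  apply/eqP; rewrite -subr_eq0 opprD addrA; apply/eqP; rewrite /r rr; exact: erho.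
have [t _ hF] := normC_sum_eq hsum.
have t1 : t = 1.
  have := hF ord0 isT; rewrite /F /= expr0 mulr1 normr1 mul1r.
  by move=> <-.
have hn : g ^+ n = `|g ^+ n|.
  have := hF (inord n) isT; rewrite /F /= inordK // (ltn_eqF (ltnSn n)) mul1r t1 mulr1.
  by [].
have hn1 : g ^+ n.+1 = `|g ^+ n.+1|.
  have := hF ord_max isT; rewrite /F /= eqxx t1 mulr1 normrM normr_nat.
  by move/(mulfI _); apply; rewrite pnatr_eq0 -lt0n.
have gn0 : g ^+ n != 0 by rewrite expf_neq0.
apply: (mulIf gn0); rewrite -exprS hn1 normrX exprS -normrX -hn.
by rewrite rr.
Qed.
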